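(* Let $X$ be a Tychonoff space and let $\mathcal{H}$ be a subspace with $\mathcal{F}_2(X)\subset\mathcal{H}\subset\mathcal{K}(X)$. Then the following are equivalent: (a) $X$ is a $P$-space; (b) $\mathcal{H}$ is a $P$-space; (c) $\mathcal{H}$ is an $F'$-space.
   Context: For a $T_1$ space $X$, $\mathcal{K}(X)$ is the set of nonempty compact subsets of $X$ with the Vietoris topology (generated by $U^+=\{A: A\subset U\}$ and $U^-=\{A: A\cap U\neq\emptyset\}$ for $U$ open in $X$), and $\mathcal{F}_n(X)\subset\mathcal{K}(X)$ is the subspace of nonempty subsets with at most $n$ points. A point $p$ is a $P$-point of $X$ if $p$ lies in the interior of every $G_\delta$ set containing it; $X$ is a $P$-space if all its points are $P$-points. A cozero set is the complement of the zero set $f^{-1}(0)$ of a continuous real-valued function $f$. An $F'$-space is a Tychonoff space in which any two disjoint cozero sets have disjoint closures. *)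

(* Defs.v *)
From HB Require Import structures.
From mathcomp Require Import all_boot all_order all_algebra.
From mathcomp Require Import all_classical all_reals all_analysis.
Set Implicit Arguments. Unset Strict Implicit. Unset Printing Implicit Defensive.
Import Order.TTheory GRing.Theory Num.Theory.
Import numFieldTopology.Exports.
Local Open Scope classical_set_scope.
Local Open Scope ring_scope.

Definition Gdelta {T : topologicalType} (G : set T) : Prop :=
  exists U : nat -> set T, (forall n, open (U n)) /\ G = \bigcap_n U n.

Definition P_point {T : topologicalType} (p : T) : Prop :=
  forall G : set T, Gdelta G -> G p -> (G°) p.

Definition P_space (T : topologicalType) : Prop := forall p : T, P_point p.

Definition tychonoff_space (R : realType) (T : topologicalType) : Prop :=
  accessible_space T /\
  forall (x : T) (B : set T), closed B -> ~ B x ->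
    exists f : T -> R, continuous f /\ f x = 0 /\ (forall b, B b -> f b = 1).

Definition cozero_set (R : realType) {T : topologicalType} (C : set T) : Prop :=
  exists f : T -> R, continuous f /\ C = ~` (f @^-1` [set 0]).

Definition F'_space (R : realType) (T : topologicalType) : Prop :=
  tychonoff_space R T /\
  forall C1 C2 : set T, cozero_set R C1 -> cozero_set R C2 ->
    C1 `&` C2 = set0 -> closure C1 `&` closure C2 = set0.

(** The type of (all) subsets of X, to be equipped with the Vietoris
    topology generated by U^+ and U^- for U open in X. K(X) and F_n(X)
    are then subsets of this space, with the subspace topology. *)
Definition hyperspace (X : topologicalType) : Type := set X.

Section Vietoris.
Context (X : topologicalType).

HB.instance Definition _ := Choice.copy (hyperspace X) (set X).
HB.instance Definition _ := Pointed.copy (hyperspace X) (set X).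

Definition upper (U : set X) : set (hyperspace X) := [set A | A `<=` U].
Definition lower (U : set X) : set (hyperspace X) := [set A | A `&` U !=set0].

Definition vietoris_subbase (i : bool * set X) : set (hyperspace X) :=
  if i.1 then upper i.2 else lower i.2.

HB.instance Definition _ :=
  isSubBaseTopological.Build (hyperspace X)
    (fun i : bool * set X => open i.2) vietoris_subbase.

End Vietoris.

Definition Kspace (X : topologicalType) : set (hyperspace X) :=
  [set A : hyperspace X | A !=set0 /\ compact A].

Definition Fspace (X : topologicalType) (n : nat) : set (hyperspace X) :=
  [set A : hyperspace X | A !=set0 /\
     exists s : seq X, (size s <= n)%N /\ A `<=` [set x | x \in s]].
Arguments Kspace : clear implicits.
Arguments Fspace : clear implicits.
Arguments F'_space : clear implicits.
Arguments tychonoff_space : clear implicits.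
Arguments P_space : clear implicits.

(* Main.v *)
Require Import Defs.
From HB Require Import structures.
From mathcomp Require Import all_boot all_order all_algebra.
From mathcomp Require Import all_classical all_reals all_analysis.
From mathcomp Require Import finmap ring lra.
Set Implicit Arguments. Unset Strict Implicit. Unset Printing Implicit Defensive.
Import Order.TTheory GRing.Theory Num.Theory.
Import numFieldTopology.Exports.
Local Open Scope classical_set_scope.
Local Open Scope ring_scope.

Section Gen.
Context {T : topologicalType}.

Lemma fin_bigcap_open (I : eqType) (s : seq I) (f : I -> set T) :
  (forall i, i \in s -> open (f i)) -> open [set x | forall i, i \in s -> f i x].
Proof.
elim: s => [|a s IH] H.
  rewrite (_ : [set x | _] = setT); first exact: openT.
  by apply/seteqP; split => x //= _ i.
rewrite (_ : [set x | _] = f a `&` [set x | forall i, i \in s -> f i x]).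
  apply: openI; first by apply: H; rewrite inE eqxx.
  by apply: IH => i si; apply: H; rewrite inE si orbT.
apply/seteqP; split => x /=.
  by move=> Hx; split => [|i si]; apply: Hx; rewrite inE ?eqxx ?si ?orbT.
by move=> [fa Hs] i; rewrite inE => /orP[/eqP->|/Hs].
Qed.

Lemma fin_bigcap_closed (I : eqType) (s : seq I) (f : I -> set T) :
  (forall i, i \in s -> closed (f i)) -> closed [set x | forall i, i \in s -> f i x].
Proof.
elim: s => [|a s IH] H.
  rewrite (_ : [set x | _] = setT); first exact: closedT.
  by apply/seteqP; split => x //= _ i.
rewrite (_ : [set x | _] = f a `&` [set x | forall i, i \in s -> f i x]).
  apply: closedI; first by apply: H; rewrite inE eqxx.
  by apply: IH => i si; apply: H; rewrite inE si orbT.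
apply/seteqP; split => x /=.
  by move=> Hx; split => [|i si]; apply: Hx; rewrite inE ?eqxx ?si ?orbT.
by move=> [fa Hs] i; rewrite inE => /orP[/eqP->|/Hs].
Qed.

Lemma fin_bigcup_closed (I : eqType) (s : seq I) (f : I -> set T) :
  (forall i, i \in s -> closed (f i)) -> closed [set x | exists2 i, i \in s & f i x].
Proof.
elim: s => [|a s IH] H.
  rewrite (_ : [set x | _] = set0); first exact: closed0.
  by apply/seteqP; split => x //= [].
rewrite (_ : [set x | _] = f a `|` [set x | exists2 i, i \in s & f i x]).
  apply: closedU; first by apply: H; rewrite inE eqxx.
  by apply: IH => i si; apply: H; rewrite inE si orbT.
apply/seteqP; split => x /=.
  by move=> [i]; rewrite inE => /orP[/eqP->|si fx]; [left|right; exists i].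
by move=> [fa|[i si fx]]; [exists a; rewrite ?inE ?eqxx|exists i; rewrite ?inE ?si ?orbT].
Qed.

Lemma Pspace_bigcap_open (U : nat -> set T) : P_space T ->
  (forall n, open (U n)) -> open (\bigcap_n U n).
Proof.
move=> PT oU; rewrite openE => x Gx.
by apply: (PT x) => //; exists U.
Qed.

Lemma interiorP (A : set T) x : (exists B, [/\ open B, B x & B `<=` A]) -> (A°) x.
Proof. by move=> [B [oB Bx BA]]; rewrite /interior nbhsE; exists B. Qed.

End Gen.

Definition ptd (T : topologicalType) (x : T) : Type := T.
HB.instance Definition _ (T : topologicalType) (x : T) := Topological.on (ptd x).
HB.instance Definition _ (T : topologicalType) (x : T) := isPointed.Build (ptd x) x.

Lemma compact_cover_gen (T : topologicalType) (A : set T) :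
  compact A -> cover_compact A.
Proof.
move=> cA.
have [/eqP->|/set0P[x Ax]] := boolP (A == set0).
  by move=> I D f _ _; exists fset0.
have := @compact_cover (ptd x).
move=> E; have : @cover_compact (ptd x) A by rewrite -E.
by [].
Qed.

Lemma exists_inv_lt (R : realType) (e : R) : 0 < e -> exists n : nat, n.+1%:R^-1 < e.
Proof.
move=> e0; exists (Num.bound e^-1).
rewrite invf_plt ?posrE ?ltr0n //.
apply: (lt_le_trans (archi_boundP _)); first by rewrite invr_ge0 ltW.
by rewrite ler_nat.
Qed.

Lemma Pspace_zero_open (R : realType) (T : topologicalType) (f : T -> R) :
  P_space T -> continuous f -> open (f @^-1` [set 0]).
Proof.
move=> PT cf.
rewrite (_ : f @^-1` _ = \bigcap_n (f @^-1` ball (0:R) (n.+1%:R^-1))).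
  apply: Pspace_bigcap_open => // n.
  by move/continuousP : cf; apply; exact: ball_open.
apply/seteqP; split => x /=.
  move=> fx0 n _ /=; rewrite fx0; apply: ballxx; by rewrite invr_gt0 ltr0n.
move=> Hx; apply/eqP; apply: contraT => fx0.
have [n Hn] : exists n : nat, n.+1%:R^-1 < `|f x|.
  by apply: exists_inv_lt; rewrite normr_gt0.
have := Hx n I; rewrite -ball_normE /ball_ /= sub0r normrN => /(lt_trans Hn).
by rewrite ltxx.
Qed.

Lemma Pspace_cozero_closed (R : realType) (T : topologicalType) (C : set T) :
  P_space T -> cozero_set R C -> closed C.
Proof.
move=> PT [f [cf ->]]; apply: open_closedC; exact: Pspace_zero_open.
Qed.

Lemma Pspace_F' (R : realType) (T : topologicalType) : P_space T ->
  forall C1 C2 : set T, cozero_set R C1 -> cozero_set R C2 ->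
    C1 `&` C2 = set0 -> closure C1 `&` closure C2 = set0.
Proof.
move=> PT C1 C2 h1 h2.
rewrite -(closure_id C1).1; last exact: (Pspace_cozero_closed PT h1).
by rewrite -(closure_id C2).1; last exact: (Pspace_cozero_closed PT h2).
Qed.

Section Hyp.
Context {X : topologicalType}.

Lemma hopen_sub (i : bool * set X) : open i.2 -> @open (hyperspace X) (vietoris_subbase i).
Proof.
case: i => b U /= oU.
exists [set vietoris_subbase (b,U)].
 move=> _ ->. exact: finI_from1.
by rewrite bigcup_set1.
Qed.

Lemma hopen_upper (U : set X) : open U -> @open (hyperspace X) (upper U).
Proof. by move=> oU; apply: (@hopen_sub (true, U)). Qed.

Lemma hopen_lower (U : set X) : open U -> @open (hyperspace X) (lower U).
Proof. by move=> oU; apply: (@hopen_sub (false, U)). Qed.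

Lemma hclosed_upper (U : set X) : closed U -> @closed (hyperspace X) (upper U).
Proof.
move=> cU; rewrite -[upper U]setCK; apply: open_closedC.
rewrite (_ : ~` upper U = lower (~` U)); first by apply: hopen_lower; exact: closed_openC.
apply/seteqP; split => A /=.
  by move=> /existsNP [x /not_implyP [Ax nUx]]; exists x.
by move=> [x [Ax nUx]] AU; apply: nUx; apply: AU.
Qed.

Lemma hclosed_lower (U : set X) : closed U -> @closed (hyperspace X) (lower U).
Proof.
move=> cU; rewrite -[lower U]setCK; apply: open_closedC.
rewrite (_ : ~` lower U = upper (~` U)); first by apply: hopen_upper; exact: closed_openC.
apply/seteqP; split => A /=.
  by move=> nAU x Ax Ux; apply: nAU; exists x.
by move=> AU [x [Ax Ux]]; exact: (AU x Ax).
Qed.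

Lemma hopen_nbhs (O : set (hyperspace X)) (A : hyperspace X) : open O -> O A ->
  exists s : seq (bool * set X), [/\ (forall i, i \in s -> open i.2),
    (forall i, i \in s -> vietoris_subbase i A) &
    (forall B, (forall i, i \in s -> vietoris_subbase i B) -> O B)].
Proof.
rewrite /open /= => -[D0 sD0 <-] [S] D0S SA.
have [F sF FS] := sD0 _ D0S.
rewrite -FS in SA.
exists (enum_fset F); split.
- by move=> i /sF /set_mem.
- by move=> i iF; apply: SA.
move=> B HB; exists S => //.
change (S B); rewrite -FS => i /= iF; exact: HB.
Qed.

Lemma sopen_preim (H : set (hyperspace X)) (O : set (hyperspace X)) :
  open O -> @open (set_type H) (set_val @^-1` O).
Proof. by move=> oO; exists O. Qed.

Lemma sopen_inv (H : set (hyperspace X)) (U : set (set_type H)) :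
  open U -> exists O : set (hyperspace X), open O /\ U = set_val @^-1` O.
Proof. by move=> [V oV <-]; exists V. Qed.

End Hyp.

Lemma subbase_single {X : topologicalType} (i : bool * set X) (x : X) :
  vietoris_subbase i [set x] <-> i.2 x.
Proof.
case: i => [[] U] /=; rewrite /upper /lower /=; split.
- by apply.
- by move=> Ux y ->.
- by move=> [y [-> Uy]].
- by move=> Ux; exists x.
Qed.

Definition spt {X : topologicalType} (H : set (hyperspace X)) (A : hyperspace X)
  (HA : H A) : set_type H := @exist _ _ A (mem_set HA).

Lemma PH_PX {X : topologicalType} (H : set (hyperspace X)) :
  (forall x : X, H [set x]) -> P_space (set_type H) -> P_space X.
Proof.
move=> H1 PH p G [U [oU ->]] Gp.
pose V n : set (set_type H) := set_val @^-1` (upper (U n)).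
have oV n : open (V n) by apply: sopen_preim; apply: hopen_upper.
pose q := spt (H1 p).
have GVq : (\bigcap_n V n) q by move=> n _ y /= ->; exact: Gp.
have := PH q (\bigcap_n V n) (ex_intro _ V (conj oV erefl)) GVq.
rewrite /interior nbhsE => -[B [oB Bq] BG].
have [Q0 [oQ0 BQ0]] := sopen_inv oB.
have Q0p : Q0 [set p] by move: Bq; rewrite BQ0.
have [s [os sp sQ0]] := hopen_nbhs oQ0 Q0p.
apply: interiorP; exists [set x | forall i, i \in s -> i.2 x]; split.
- exact: fin_bigcap_open.
- by move=> i /sp /subbase_single.
move=> x /= Wx n _.
have : B (spt (H1 x)).
  rewrite BQ0 /=; apply: sQ0 => i /Wx Hi; exact/subbase_single.
by move=> /BG /(_ n I) /=; apply.
Qed.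

Lemma PX_PH {X : topologicalType} (H : set (hyperspace X)) :
  accessible_space X -> P_space X -> H `<=` Kspace X -> P_space (set_type H).
Proof.
move=> T1 PX HK p G [U [oU ->]] Gp.
set A := set_val p.
have [A0 cA] : A !=set0 /\ compact A by apply: HK; exact: set_mem (valP p).
have [Q HQ] := choice (fun n => sopen_inv (oU n)).
have QA n : Q n A by have := Gp n I; rewrite (HQ n).2.
have [s Hs] := choice (fun n => hopen_nbhs (HQ n).1 (QA n)).
pose g (i : bool * set X) := if i.1 then i.2 else setT.
pose Up := \bigcap_n [set x | forall i, i \in s n -> g i x].
have oUp : open Up.
  apply: Pspace_bigcap_open => // n; apply: fin_bigcap_open => i si.
  by rewrite /g; case: ifP => _; [case: (Hs n) => + _ _; apply|exact: openT].
have AUp : A `<=` Up.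
  move=> x Ax n _ [[] V] si //=.
  by case: (Hs n) => _ + _ => /(_ _ si) /=; apply.
have [pt Hpt] : {pt : bool * set X -> X & forall i, A (pt i) /\ (lower i.2 A -> i.2 (pt i))}.
  apply: (@choice _ _ (fun i y => A y /\ (lower i.2 A -> i.2 y))) => i.
  have [[y [Ay iy]]|nl] := pselect (lower i.2 A).
    by exists y.
  by case: A0 => a Aa; exists a; split => // /nl.
pose D := [set y | exists n, exists2 i, i \in s n & ~~ i.1 /\ y = pt i].
have DA : D `<=` A by move=> y [n [i _ [_ ->]]]; exact: (Hpt i).1.
have oCS (S : set X) : S `<=` D -> open (~` S).
  move=> SD.
  pose h i := if ~~ i.1 && `[< S (pt i) >] then ~` [set pt i] else setT.
  rewrite (_ : ~` S = \bigcap_n [set x | forall i, i \in s n -> h i x]).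
    apply: Pspace_bigcap_open => // n; apply: fin_bigcap_open => i si.
    rewrite /h; case: ifP => _; last exact: openT.
    by apply: closed_openC; exact: accessible_closed_set1.
  apply/seteqP; split => x /=.
    move=> nSx n _ i si; rewrite /h; case: ifP => // /andP[_ /asboolP Spt] xpt.
    by apply: nSx; rewrite xpt.
  move=> Hx Sx; have [n [i si [i1 xe]]] := SD _ Sx.
  have := Hx n I i si; rewrite /h i1 /=.
  have -> : `[< S (pt i) >] = true by apply/asboolP; rewrite -xe.
  by [].
pose Dom := [set o : option X | if o is Some y then D y else True].
pose f (o : option X) := if o is Some y then ~` (D `\ y) else ~` D.
have [D' D'Dom AD'] : finite_subset_cover Dom f A.
  apply: (compact_cover_gen cA).
    move=> [y|] _ /=; apply: oCS => //; exact: subDsetl.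
  move=> a Aa; have [Da|nDa] := pselect (D a).
    by exists (Some a) => //= -[].
  by exists None.
pose L := pmap id (enum_fset D').
have LD y : y \in L -> D y.
  rewrite mem_pmap map_id => yD'.
  by have := D'Dom _ yD'; move/set_mem.
have DL y : D y -> y \in L.
  move=> Dy; have [[z|] zD' fz] := AD' _ (DA _ Dy); last by [].
  have yz : y = z.
    apply: contrapT => nyz; apply: fz; split => //; exact/nesym.
  by rewrite mem_pmap map_id yz.
pose k (y : X) (i : bool * set X) : set X := if ~~ i.1 && `[< i.2 y >] then i.2 else setT.
pose W (y : X) : set X := \bigcap_n [set x | forall i, i \in s n -> k y i x].
have oW y : open (W y).
  apply: Pspace_bigcap_open => // n; apply: fin_bigcap_open => i si.
  rewrite /k; case: ifP => [/andP[i1 _]|_]; last exact: openT.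
  by case: (Hs n) => + _ _; apply.
pose N := upper Up `&` [set B | forall y, y \in L -> lower (W y) B].
have oN : open N.
  apply: openI; first exact: hopen_upper.
  by apply: fin_bigcap_open => y _; apply: hopen_lower.
apply: interiorP; exists (set_val @^-1` N); split.
- exact: sopen_preim.
- split; first exact: AUp.
  move=> y yL; exists y; split; first exact/DA/LD.
  move=> n _ i si; rewrite /k; case: ifP => // /andP[_ /asboolP] //.
move=> B [BUp BW] n _; rewrite /= (HQ n).2 /=.
case: (Hs n) => _ sA sQ; apply: sQ.
move=> [[] V] si /=.
  move=> x Bx; have := BUp x Bx n I (true, V) si; by [].
have lA : lower V A by exact: (sA _ si).
have Vpt : V (pt (false, V)) by exact: (Hpt (false, V)).2.
have ptL : pt (false, V) \in L by apply: DL; exists n; exists (false, V).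
have [x [Bx Wx]] := BW _ ptL.
exists x; split => //.
have := Wx n I (false, V) si; rewrite /k /=.
by have -> : `[< V (pt (false, V)) >] = true by apply/asboolP.
Qed.

Lemma fin_bigcup_open {T : topologicalType} (I : eqType) (s : seq I) (f : I -> set T) :
  (forall i, i \in s -> open (f i)) -> open [set x | exists2 i, i \in s & f i x].
Proof.
move=> H; rewrite (_ : [set x | _] = \bigcup_(i in [set i | i \in s]) f i).
  by apply: bigcup_open => i /= /H.
by apply/seteqP; split => x /= [i si fx]; exists i.
Qed.

Lemma open_const {T : topologicalType} (P : Prop) : open [set _ : T | P].
Proof.
have [p|np] := pselect P.
  by rewrite (_ : [set _ | P] = setT); [exact: openT|apply/seteqP; split].
by rewrite (_ : [set _ | P] = set0); [exact: open0|apply/seteqP; split].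
Qed.

Section Tych.
Context (R : realType) (X : topologicalType).
Hypothesis TX : tychonoff_space R X.
Hypothesis PX : P_space X.

Lemma Z1 (U : set X) (x : X) : open U -> U x ->
  exists C, [/\ clopen C, C x & C `<=` U].
Proof.
move=> oU Ux.
have [f [cf [fx f1]]] := TX.2 x (~` U) (open_closedC oU) (fun h => h Ux).
exists (f @^-1` [set 0]); split => //.
- split; first exact: Pspace_zero_open.
  apply: preimage_closed; first by move=> y _; exact: cf.
  exact: closed_eq.
- move=> y /= fy0; apply: contrapT => nUy.
  have := f1 y nUy; rewrite fy0 => /eqP; by rewrite eq_sym oner_eq0.
Qed.

Lemma Z2 (U A : set X) : open U -> compact A -> A `<=` U ->
  exists C, [/\ clopen C, A `<=` C & C `<=` U].
Proof.
move=> oU cA AU.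
have [Cf HC] : {Cf : X -> set X & forall x, clopen (Cf x) /\ (U x -> Cf x x /\ Cf x `<=` U)}.
  apply: (@choice _ _ (fun x C => clopen C /\ (U x -> C x /\ C `<=` U))) => x.
  have [Ux|nUx] := pselect (U x).
    by have [C [? ? ?]] := Z1 oU Ux; exists C.
  by exists set0; split => //; exact: clopen0.
have [D' D'A AD'] := compact_cover_gen cA (fun x _ => (HC x).1.1)
  (fun x Ax => ex_intro2 _ _ x Ax ((HC x).2 (AU x Ax)).1).
exists [set y | exists2 i, i \in enum_fset D' & Cf i y]; split.
- split; first by apply: fin_bigcup_open => i _; exact: (HC i).1.1.
  by apply: fin_bigcup_closed => i _; exact: (HC i).1.2.
- by move=> a /AD' [i iD' Cia]; exists i.
- move=> y [i iD' Ciy].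
  have Ai : A i by have := D'A _ iD'; move/set_mem.
  exact: ((HC i).2 (AU _ Ai)).2.
Qed.

Lemma sep_compact (B : set X) (a : X) : compact B -> ~ B a ->
  exists C, [/\ open C, C a & C `&` B = set0].
Proof.
move=> cB nBa.
have [C [[oC cC] BC CU]] := Z2 (closed_openC (@accessible_closed_set1 X TX.1 a)) cB
  (fun b Bb ba => nBa (eq_ind _ B Bb _ ba)).
exists (~` C); split.
- exact: closed_openC.
- by move=> /CU /(_ erefl).
- by apply/seteqP; split => y // [nCy /BC].
Qed.
End Tych.

Section TychH.
Context (R : realType) (X : topologicalType).
Hypothesis TX : tychonoff_space R X.
Hypothesis PX : P_space X.
Variable H : set (hyperspace X).
Hypothesis HK : H `<=` Kspace X.

Lemma HK' (x : set_type H) : set_val x !=set0 /\ compact (set_val x).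
Proof. by apply: HK; exact: set_mem (valP x). Qed.

Lemma accH : accessible_space (set_type H).
Proof.
move=> x y /eqP nxy.
have nv : set_val x <> set_val y by move=> e; apply: nxy; exact: val_inj.
have [[a [xa nya]]|] := pselect (exists a, set_val x a /\ ~ set_val y a).
  have [C [oC Ca CB]] := sep_compact TX PX (HK' y).2 nya.
  exists (set_val @^-1` lower C); split.
  - by apply: sopen_preim; exact: hopen_lower.
  - by apply: mem_set; exists a.
  - apply: mem_set => -[b [yb Cb]].
    have : (C `&` set_val y) b by []. rewrite CB. done.
move=> nex.
have [b [yb nxb]] : exists b, set_val y b /\ ~ set_val x b.
  apply: contrapT => nb; apply: nv; apply/seteqP; split => z zz.
    by apply: contrapT => nyz; apply: nex; exists z.
  by apply: contrapT => nxz; apply: nb; exists z.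
exists (set_val @^-1` upper (~` [set b])); split.
- apply: sopen_preim; apply: hopen_upper; apply: closed_openC.
  exact: (@accessible_closed_set1 X TX.1 b).
- by apply: mem_set => z xz zb; apply: nxb; rewrite -zb.
- by apply: mem_set => /(_ b yb) /(_ erefl).
Qed.

Lemma cregH (x : set_type H) (B : set (set_type H)) : closed B -> ~ B x ->
  exists f : set_type H -> R, continuous f /\ f x = 0 /\ (forall b, B b -> f b = 1).
Proof.
move=> cB nBx.
have [Q0 [oQ0 eQ0]] := sopen_inv (closed_openC cB).
have Q0x : Q0 (set_val x) by have : (~` B) x by []; rewrite eQ0.
have [s [os sx sQ0]] := hopen_nbhs oQ0 Q0x.
set A := set_val x.
have [Ci HCi] : {Ci : bool * set X -> set X & forall i, clopen (Ci i) /\ (i \in s ->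
   (if i.1 then A `<=` Ci i else (A `&` Ci i) !=set0) /\ Ci i `<=` i.2)}.
  apply: (@choice _ _ (fun i C => clopen C /\ (i \in s ->
     (if i.1 then A `<=` C else (A `&` C) !=set0) /\ C `<=` i.2))) => i.
  have [si|nsi] := boolP (i \in s); last by exists set0; split => //; exact: clopen0.
  move: (sx i si) (os i si); case: i si => [[] V] si /= sA oV.
    have [C [cC AC CV]] := Z2 TX PX oV (HK' x).2 sA.
    by exists C.
  case: sA => a [Aa Va].
  have [C [cC Ca CV]] := Z1 TX PX oV Va.
  by exists C; split => //; split => //; exists a.
pose Qs := [set Bh : hyperspace X | forall i, i \in s -> vietoris_subbase (i.1, Ci i) Bh].
have oQs : open Qs.
  by apply: fin_bigcap_open => i _; apply: hopen_sub; exact: (HCi i).1.1.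
have cQs : closed Qs.
  apply: fin_bigcap_closed => i _; have := (HCi i).1.2.
  by case: i => [[] V] /= cC; [exact: hclosed_upper|exact: hclosed_lower].
have Qsx : Qs A.
  move=> i si; have := ((HCi i).2 si).1; by case: i si => [[] V].
have QsQ0 : Qs `<=` Q0.
  move=> Bh QB; apply: sQ0 => i si.
  have := QB i si; have := ((HCi i).2 si).2.
  case: i si => [[] V] si /= CV.
    by move=> BC z /BC /CV.
  by move=> [z [Bz Cz]]; exists z; split => //; exact: CV.
pose f (y : set_type H) : R := if `[< Qs (set_val y) >] then 0 else 1.
exists f; split; [|split].
- apply/continuousP => V oV.
  rewrite (_ : f @^-1` V = (set_val @^-1` Qs `&` [set _ | V 0]) `|`
                           (set_val @^-1` (~` Qs) `&` [set _ | V 1])).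
    apply: openU; apply: openI; try exact: open_const.
      exact: sopen_preim.
    by apply: sopen_preim; exact: closed_openC.
  apply/seteqP; split => y /=; rewrite /f.
    by case: ifP => /asboolP h Vy; [left|right].
  by move=> [[h Vy]|[h Vy]]; case: ifP => /asboolP.
- by rewrite /f; case: ifP => // /asboolP.
- move=> b Bb; rewrite /f; case: ifP => // /asboolP /QsQ0 Q0b.
  by have : (~` B) b by rewrite eQ0.
Qed.

Lemma tychH : tychonoff_space R (set_type H).
Proof. split; [exact: accH|exact: cregH]. Qed.

End TychH.

Lemma approx_cont (R : realType) (T : topologicalType) (g : T -> R) :
  (forall e : R, 0 < e -> exists h : T -> R, continuous h /\ forall x, `|g x - h x| < e) ->
  continuous g.
Proof.
move=> Ha x; apply: (@cvgrPdist_lt _ R^o _ _ _ g (g x)).2 => e e0.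
have e3 : 0 < e / 3 by rewrite divr_gt0.
have [h [ch hx]] := Ha _ e3.
have := (@cvgrPdist_lt _ R^o _ _ (nbhs_filter x) h (h x)).1 (ch x) _ e3.
move=> H1; near=> y; have hy : `|h x - h y| < e / 3 by near: y; exact: H1.
have -> : g x - g y = (g x - h x) + ((h x - h y) + (h y - g y)) by ring.
apply: (le_lt_trans (ler_normD _ _)).
apply: (le_lt_trans (lerD (lexx _) (ler_normD _ _))).
have := hx x; have := hx y; rewrite distrC => h1 h2.
lra.
Unshelve. all: end_near. Qed.

Section GFun.
Context (R : realType) (T : topologicalType) (c : nat -> T -> R).
Hypothesis cc : forall n, continuous (c n).
Hypothesis c01 : forall n x, 0 <= c n x <= 1.

Definition term n x := c n x / n.+1%:R.

Lemma term_ge0 n x : 0 <= term n x.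
Proof. by rewrite /term divr_ge0 // (andP (c01 n x)).1. Qed.

Lemma term_le n x : term n x <= n.+1%:R^-1.
Proof.
rewrite /term -[X in _ <= X]mul1r ler_wpM2r ?invr_ge0 //.
exact: (andP (c01 n x)).2.
Qed.

Lemma term_cont n : continuous (term n).
Proof. by move=> x; apply: cvgM; [exact: cc|exact: cvg_cst]. Qed.

Definition gs x := sup (range (fun n => term n x)).

Lemma gs_hs x : has_sup (range (fun n => term n x)).
Proof.
split; first by exists (term 0 x), 0%N.
exists 1 => _ [n _ <-]; apply: (le_trans (term_le n x)).
by rewrite invf_le1 // ler1n.
Qed.

Lemma gs_ge n x : term n x <= gs x.
Proof. by apply: sup_upper_bound; [exact: gs_hs|exists n]. Qed.

Lemma gs_le x b : (forall n, term n x <= b) -> gs x <= b.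
Proof. by move=> hb; apply: ge_sup; [exists (term 0 x), 0%N|move=> _ [n _ <-]]. Qed.

Lemma gs_ge0 x : 0 <= gs x.
Proof. exact: le_trans (term_ge0 0 x) (gs_ge 0 x). Qed.

Lemma gs_le1 x : gs x <= 1.
Proof.
apply: gs_le => n; apply: (le_trans (term_le n x)).
by rewrite invf_le1 // ler1n.
Qed.

Fixpoint hN (N : nat) (x : T) : R :=
  if N is N'.+1 then Num.max (hN N' x) (term N' x) else 0.

Lemma hN_ge0 N x : 0 <= hN N x.
Proof. by case: N => //= N; rewrite le_max term_ge0 orbT. Qed.

Lemma hN_ge N n x : (n < N)%N -> term n x <= hN N x.
Proof.
elim: N => // N IH; rewrite ltnS leq_eqVlt => /orP[/eqP->|nN] /=.
  by rewrite le_max lexx orbT.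
by rewrite le_max IH.
Qed.

Lemma hN_le N x b : 0 <= b -> (forall n, (n < N)%N -> term n x <= b) -> hN N x <= b.
Proof.
move=> b0; elim: N => // N IH Hb /=; rewrite ge_max IH ?Hb //.
by move=> n nN; apply: Hb; rewrite ltnS ltnW.
Qed.

Lemma hN_cont N : continuous (hN N).
Proof.
elim: N => [|N IH] /=; first by move=> x; exact: cvg_cst.
move=> x; apply: (@continuous_max R T (hN N) (term N)); [exact: IH|exact: term_cont].
Qed.

Lemma gs_cont : continuous gs.
Proof.
apply: approx_cont => e e0.
have [N HN] := exists_inv_lt e0.
exists (hN N); split; first exact: hN_cont.
move=> x.
have h1 : hN N x <= gs x by apply: hN_le; [exact: gs_ge0|move=> n _; exact: gs_ge].
have h2 : gs x <= hN N x + N.+1%:R^-1.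
  apply: gs_le => n; have [nN|Nn] := ltnP n N.
    by apply: (le_trans (hN_ge x nN)); rewrite lerDl invr_ge0.
  apply: (le_trans (term_le n x)).
  apply: (@le_trans _ _ N.+1%:R^-1); last by rewrite lerDr hN_ge0.
  by rewrite lef_pV2 ?posrE ?ltr0n // ler_nat.
rewrite ger0_norm ?subr_ge0 //.
apply: le_lt_trans HN; rewrite lerBlDl; exact: h2.
Qed.
End GFun.

Section Smax.
Context (R : realType) (X : topologicalType) (H : set (hyperspace X)).
Definition sv (y : set_type H) : set X := @set_val _ H y.

Hypothesis HN : forall y : set_type H, sv y !=set0.
Variable g : X -> R.
Hypothesis cg : continuous g.
Hypothesis g01 : forall x, 0 <= g x <= 1.

Definition Smax (y : set_type H) := sup (g @` sv y).

Lemma Smax_hs y : has_sup (g @` sv y).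
Proof.
split; first by have [a ya] := HN y; exists (g a), a.
by exists 1 => _ [a _ <-]; exact: (andP (g01 a)).2.
Qed.

Lemma Smax_ge y a : sv y a -> g a <= Smax y.
Proof. by move=> ya; apply: sup_upper_bound; [exact: Smax_hs|exists a]. Qed.

Lemma Smax_le y b : (forall a, sv y a -> g a <= b) -> Smax y <= b.
Proof.
move=> hb; apply: ge_sup; first by have [a ya] := HN y; exists (g a), a.
by move=> _ [a ya <-]; exact: hb.
Qed.

Lemma Smax_cont : continuous Smax.
Proof.
move=> y; apply: (@cvgrPdist_lt _ R^o _ _ (nbhs_filter y) Smax (Smax y)).2 => e e0.
set M := Smax y.
have e2 : 0 < e / 2 by rewrite divr_gt0.
have [_ [a ya <-] ga] := sup_adherent e2 (Smax_hs y).
pose N := @set_val _ H @^-1` (upper (g @^-1` [set r | r < M + e / 2]) `&`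
                          lower (g @^-1` [set r | r > M - e / 2])).
rewrite nbhsE /=; exists N.
  split.
    apply: sopen_preim; apply: openI.
      by apply: hopen_upper; move/continuousP : cg; apply; exact: open_lt.
    by apply: hopen_lower; move/continuousP : cg; apply; exact: open_gt.
  split; last by exists a.
  move=> z yz /=; apply: (le_lt_trans (Smax_ge yz)).
  by rewrite /M ltrDl.
move=> t [Ut [b [tb gb]]] /=.
rewrite ltr_distlC; apply/andP; split.
  apply: (lt_le_trans _ (Smax_ge tb)); apply: le_lt_trans gb.
  rewrite lerD2l lerN2 ler_pdivrMr //; lra.
apply: (le_lt_trans (Smax_le (b := M + e / 2) _)).
  by move=> z /Ut /= /ltW.
by rewrite ltrD2l ltr_pdivrMr //; lra.
Qed.
End Smax.

Section ContR.
Context {R : realType} {T : topologicalType}.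
Lemma contB (f g : T -> R) : continuous f -> continuous g -> continuous (fun x => f x - g x).
Proof. by move=> cf cg x; apply: cvgB; [exact: cf|exact: cg]. Qed.
Lemma contD (f g : T -> R) : continuous f -> continuous g -> continuous (fun x => f x + g x).
Proof. by move=> cf cg x; apply: cvgD; [exact: cf|exact: cg]. Qed.
Lemma contM (f g : T -> R) : continuous f -> continuous g -> continuous (fun x => f x * g x).
Proof. by move=> cf cg x; apply: cvgM; [exact: cf|exact: cg]. Qed.
Lemma contN (f : T -> R) : continuous f -> continuous (fun x => - f x).
Proof. by move=> cf x; apply: cvgN; exact: cf. Qed.
Lemma contnorm (f : T -> R) : continuous f -> continuous (fun x => `|f x|).
Proof. by move=> cf x; apply: cvg_norm; exact: cf. Qed.
Lemma contcst (r : R) : continuous (fun _ : T => r).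
Proof. by move=> x; exact: cvg_cst. Qed.
End ContR.

Lemma posp_ne0 (R : realType) (u : R) : (u + `|u| != 0) = (0 < u).
Proof.
have [u0|u0] := leP u 0.
  by rewrite ler0_norm // subrr eqxx.
by rewrite gtr0_norm // -mulr2n mulrn_eq0 /= gt_eqF.
Qed.

Lemma F'H_PX (R : realType) (X : topologicalType) (H : set (hyperspace X)) :
  tychonoff_space R X -> Fspace X 2 `<=` H -> H `<=` Kspace X ->
  (forall C1 C2 : set (set_type H), cozero_set R C1 -> cozero_set R C2 ->
     C1 `&` C2 = set0 -> closure C1 `&` closure C2 = set0) -> P_space X.
Proof.
move=> TX FH HK F' p G [U [oU ->]] Gp; apply: contrapT => nint.
have H1 x : H [set x].
  apply: FH; split; first by exists x.
  by exists [:: x]; split => // z -> /=; rewrite mem_head.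
pose A2 (x y : X) := [set z | z = x \/ z = y].
have H2 x y : H (A2 x y).
  apply: FH; split; first by exists x; left.
  by exists [:: x; y]; split => // z [->|->] /=; rewrite !inE eqxx ?orbT.
have HN (y : set_type H) : sv y !=set0 by exact: (HK _ (set_mem (valP y))).1.
have [f Hf] : {f : nat -> X -> R & forall n, continuous (f n) /\ f n p = 0 /\
    (forall b, ~ U n b -> f n b = 1)}.
  apply: (@choice _ _ (fun n (f : X -> R) => continuous f /\ f p = 0 /\
    (forall b, ~ U n b -> f b = 1))) => n.
  have [f [cf [fp f1]]] := TX.2 p (~` U n) (open_closedC (oU n)) (fun h => h (Gp n I)).
  by exists f.
pose c n x := Num.min 1 `|f n x|.
have cc n : continuous (c n).
  move=> x; apply: (@continuous_min R X (fun=> 1) (fun x => `|f n x|)).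
    exact: cvg_cst.
  by apply: cvg_norm; exact: (Hf n).1.
have c01 n x : 0 <= c n x <= 1.
  rewrite /c ge_min lexx /= le_min ler01 normr_ge0 //.
pose g := gs c.
have gc : continuous g by exact: gs_cont.
have g01 x : 0 <= g x <= 1 by rewrite gs_ge0 // gs_le1.
have gp : g p = 0.
  apply/eqP; rewrite eq_le gs_ge0 // andbT; apply: gs_le => n.
  by rewrite /term /c (Hf n).2.1 normr0 /= minEge ler01 mul0r.
pose g' x := 1 - g x.
have g'c : continuous g'.
  by move=> x; apply: cvgB; [exact: cvg_cst|exact: gc].
have g'01 x : 0 <= g' x <= 1.
  by rewrite /g' subr_ge0 lerBlDr lerDl; have /andP[-> ->] := g01 x.
pose S := @Smax R X H g.
pose T := @Smax R X H g'.
have Sc : continuous S by exact: Smax_cont.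
have Tc : continuous T by exact: Smax_cont.
pose u1 y := 2 - 2 * T y - S y.
have u1c : continuous u1.
  apply: contB => //; apply: contB; first exact: contcst.
  by apply: contM => //; exact: contcst.
pose u2 y := - u1 y.
have u2c : continuous u2 by exact: contN.
pose phi1 y := u1 y + `|u1 y|.
pose phi2 y := u2 y + `|u2 y|.
pose C1 := ~` (phi1 @^-1` [set 0]).
pose C2 := ~` (phi2 @^-1` [set 0]).
have C1E y : C1 y <-> 0 < u1 y.
  by rewrite /C1 /= -posp_ne0; split => [/eqP|/eqP].
have C2E y : C2 y <-> 0 < u2 y.
  by rewrite /C2 /= -posp_ne0; split => [/eqP|/eqP].
have cz1 : cozero_set R C1.
  by exists phi1; split => //; apply: contD => //; exact: contnorm.
have cz2 : cozero_set R C2.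
  by exists phi2; split => //; apply: contD => //; exact: contnorm.
have dis : C1 `&` C2 = set0.
  apply/seteqP; split => y // [h1 h2].
  move: ((C1E y).1 h1) ((C2E y).1 h2) => {h1 h2} h1 h2.
  by move: h2; rewrite /u2 oppr_gt0 => /(lt_trans h1); rewrite ltxx.
pose q := spt (H1 p).
suff [cl1 cl2] : closure C1 q /\ closure C2 q.
  by have : (closure C1 `&` closure C2) q by []; rewrite F'.
have key : forall B, nbhs q B -> exists x, [/\ B (spt (H1 x)), B (spt (H2 p x)) & 0 < g x].
  move=> B; rewrite nbhsE => -[B' [oB' B'q] B'B].
  have [Q0 [oQ0 eQ]] := sopen_inv oB'.
  have Q0p : Q0 [set p] by move: B'q; rewrite eQ.
  have [s [os sp sQ0]] := hopen_nbhs oQ0 Q0p.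
  pose W := [set x | forall i, i \in s -> i.2 x].
  have [x [Wx nGx]] : exists x, W x /\ ~ (\bigcap_n U n) x.
    apply: contrapT => nex; apply: nint; apply: interiorP; exists W; split.
    - exact: fin_bigcap_open.
    - by move=> i /sp /subbase_single.
    - by move=> x Wx; apply: contrapT => nG; apply: nex; exists x.
  have [n nUx] : exists n, ~ U n x.
    by apply: contrapT => nn; apply: nGx => n _; apply: contrapT => nU; apply: nn; exists n.
  exists x; split.
  - apply: B'B; rewrite eQ /=; apply: sQ0 => i si; exact/subbase_single/Wx.
  - apply: B'B; rewrite eQ /=; apply: sQ0 => i si.
    have := sp i si; have := Wx i si.
    case: i si => [[] V] si /= Vx.
      by move=> /(_ p erefl) Vp z [->|->].
    by move=> [z [-> Vp]]; exists p; split => //; left.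
  - apply: (@lt_le_trans _ _ (term c n x)); last exact: gs_ge.
    rewrite /term /c (Hf n).2.2 // normr1 minxx mul1r.
    by rewrite invr_gt0 ltr0n.
split.
  move=> B /key [x [Bx _ gx]]; exists (spt (H1 x)); split => //; apply: (C1E _).2.
  have hS : S (spt (H1 x)) <= g x by apply: (@Smax_le R X H HN) => a /= ->.
  have hT : T (spt (H1 x)) <= g' x by apply: (@Smax_le R X H HN) => a /= ->.
  rewrite /u1; move: hS hT; rewrite /g' => hS hT; lra.
move=> B /key [x [_ Bx gx]]; exists (spt (H2 p x)); split => //; apply: (C2E _).2.
have hS : g x <= S (spt (H2 p x)) by apply: (@Smax_ge R X H HN g g01); right.
have hT : g' p <= T (spt (H2 p x)) by apply: (@Smax_ge R X H HN g' g'01); left.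
rewrite /u2 /u1; move: hS hT; rewrite /g' gp => hS hT; lra.
Qed.

Theorem theorem3p7 (R : realType) (X : topologicalType)
    (H : set (hyperspace X)) :
  tychonoff_space R X ->
  Fspace X 2 `<=` H -> H `<=` Kspace X ->
  [/\ (P_space X <-> P_space (set_type H)),
      (P_space (set_type H) <-> F'_space R (set_type H)) &
      (F'_space R (set_type H) <-> P_space X)].
Proof.
move=> TX FH HK.
have H1 x : H [set x].
  apply: FH; split; first by exists x.
  by exists [:: x]; split => // z -> /=; rewrite mem_head.
have ab : P_space X -> P_space (set_type H) := fun PX => PX_PH TX.1 PX HK.
have ba : P_space (set_type H) -> P_space X := PH_PX H1.
have ac : P_space X -> F'_space R (set_type H).
  move=> PX; split; first exact: tychH.
  exact: Pspace_F' (ab PX).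
have ca : F'_space R (set_type H) -> P_space X.
  by move=> [_ F']; exact: F'H_PX TX FH HK F'.
split; split => //.
- by move=> /ba /ac.
- by move=> /ca /ab.
Qed.
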